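(* Let $(\Sigma,\mathsf{ar})$ be an at most countable binding signature with associated $F,F_\alpha$, $a^{(n)}$, final $F_\alpha$-coalgebra $T_\alpha$, and maps $[-]_\alpha=g:\lim_n UF^n1\to\lim_n UF_\alpha^n1$ and $\iota_\alpha:UT_\alpha\to\lim_n UF_\alpha^n1$ as below. Identify $\lim_n UF^n1$ with $T_\Sigma^\infty$ via $t\mapsto(t^n)_n$. Then the set $(T_\Sigma^\infty)_{\mathrm{ffv}}$ of infinitary raw terms with finitely many free variables, together with the inclusion into $T_\Sigma^\infty$ and the map $(T_\Sigma^\infty)_{\mathrm{ffv}}\to UT_\alpha$ sending $t$ to the unique element of $T_\alpha$ whose projection to $F_\alpha^n1$ is $a^{(n)}(t^n)$ for all $n$, is a pullback in $\mathsf{Set}$ of $g$ and $\iota_\alpha$.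
   Context: Nominal sets over a countably infinite set $\mathcal V$ of names (sets with an action of the finite permutations of $\mathcal V$ in which every element has a finite support; $\mathsf{Nom}$ with equivariant maps; $U:\mathsf{Nom}\to\mathsf{Set}$ forgetful). $[\mathcal V]X$ is the name-abstraction of $X$ with elements $\langle x\rangle u$. Binding signature: set $\Sigma$ of symbols, each with arity a finite list $(n_1,\dots,n_k)$. $F_\alpha X=\mathcal V+\coprod_{\mathsf{op}}\prod_i[\mathcal V]^{n_i}X$, $FX=\mathcal V+\coprod_{\mathsf{op}}\prod_i(\mathcal V^{n_i}\times X)$, $q_X:FX\to F_\alpha X$ identity on $\mathcal V$ and $(x^1,\dots,x^n,u)\mapsto\langle x^1\rangle\cdots\langle x^n\rangle u$ on factors. Terminal chains $F^{n+1}1\to F^n1$ given by $F^n(!)$, likewise for $F_\alpha$; $a^{(0)}=\mathrm{id}_1$, $a^{(n+1)}=q_{F_\alpha^n1}\circ F(a^{(n)})$. $g:\lim UF^n1\to\lim UF_\alpha^n1$ is induced by the $a^{(n)}$, and $\iota_\alpha$ by the canonical cone from the final coalgebra $T_\alpha$ (which is the $\mathsf{Nom}$-limit, i.e. finitely supported compatible tuples, of the terminal chain). Raw infinitary terms $T_\Sigma^\infty$: possibly infinite trees built from variables $x\in\mathcal V$ and nodes $\mathsf{op}(\langle\overline{x_1}\rangle t_1,\dots,\langle\overline{x_k}\rangle t_k)$ with $\overline{x_i}$ a list of $n_i$ names; truncation $t^0=*$, $x^{n+1}=x$, $\mathsf{op}(\langle\overline{x_i}\rangle t_i)^{n+1}=\mathsf{op}(\langle\overline{x_i}\rangle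 t_i^n)$, so that $t^n$ is an element of $F^n1$ (with $1=\{*\}$). Free variables of finite terms as usual ($\mathsf{op}$ binds $\overline{x_i}$ in $t_i$), and $\mathsf{fv}(t)=\bigcup_n\mathsf{fv}(t^n)$; $(T_\Sigma^\infty)_{\mathrm{ffv}}=\{t:\mathsf{fv}(t)\text{ finite}\}$. *)

(* Defs.v *)
From Stdlib Require Import List Arith PeanoNat.
Import ListNotations.

Definition is_pullback {P A B C : Type}
  (p1 : P -> A) (p2 : P -> B) (f : A -> C) (g : B -> C) : Prop :=
  (forall x, f (p1 x) = g (p2 x)) /\
  (forall a b, f a = g b -> exists! x, p1 x = a /\ p2 x = b).

Definition V := nat.

(* V^k, a tuple of k names, first component = outermost binder *)
Fixpoint vecN (k : nat) : Type :=
  match k with 0 => unit | S k => (V * vecN k)%type end.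

Fixpoint vmap (f : V -> V) (k : nat) : vecN k -> vecN k :=
  match k with
  | 0 => fun v => v
  | S k => fun v => (f (fst v), vmap f k (snd v))
  end.

Fixpoint vIn (k : nat) : vecN k -> V -> Prop :=
  match k with
  | 0 => fun _ _ => False
  | S k => fun v x => fst v = x \/ vIn k (snd v) x
  end.

Definition swap (a b c : V) : V :=
  if Nat.eqb c a then b else if Nat.eqb c b then a else c.

Record fperm := {
  pf : V -> V;
  pg : V -> V;
  pfg : forall x, pf (pg x) = x;
  pgf : forall x, pg (pf x) = x;
  pfin : exists L : list V, forall a, ~ In a L -> pf a = a }.

Section Signature.
Variable Sig : Type.
Variable ar : Sig -> list nat.

(* prod_i (V^{n_i} x X) for the arity list l *)
Inductive Args (X : Type) : list nat -> Type :=
| ANil : Args X nil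
| ACons : forall (k : nat) (l : list nat), vecN k -> X -> Args X l -> Args X (k :: l).
Arguments ANil {X}.
Arguments ACons {X} k l _ _ _.

Fixpoint Args_map {X Y : Type} (fv : V -> V) (f : X -> Y) (l : list nat)
  (a : Args X l) : Args Y l :=
  match a in Args _ l return Args Y l with
  | ANil => ANil
  | ACons k l v x r => ACons k l (vmap fv k v) (f x) (Args_map fv f l r)
  end.

Definition FF (X : Type) : Type := (V + {op : Sig & Args X (ar op)})%type.

(* F acting on a map f (with names renamed by fv; fv = id gives F f) *)
Definition FF_map {X Y : Type} (fv : V -> V) (f : X -> Y) (t : FF X) : FF Y :=
  match t with
  | inl x => inl (fv x)
  | inr (existT _ op a) => inr (existT _ op (Args_map fv f (ar op) a))
  end.

Fixpoint Fn (n : nat) : Type :=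
  match n with 0 => unit | S n => FF (Fn n) end.

Fixpoint bang (n : nat) : Fn (S n) -> Fn n :=
  match n return Fn (S n) -> Fn n with
  | 0 => fun _ => tt
  | S n => FF_map (fun x => x) (bang n)
  end.

(* permutation action on F^n 1 (renaming of all names, bound or free) *)
Fixpoint actF (n : nat) (p : V -> V) : Fn n -> Fn n :=
  match n return Fn n -> Fn n with
  | 0 => fun t => t
  | S n => FF_map p (actF n p)
  end.

(* Equality in [V]^k (X/R), where X carries the action act and R is the
   equality of the quotient:  <a>u = <b>v  iff  for all but finitely many c,
   (a c).u = (b c).v . *)
Fixpoint abs_rel {X : Type} (R : X -> X -> Prop) (act : (V -> V) -> X -> X)
  (k : nat) : vecN k -> X -> vecN k -> X -> Prop :=
  match k return vecN k -> X -> vecN k -> X -> Prop with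
  | 0 => fun _ u _ v => R u v
  | S k => fun xs u ys v =>
      exists L : list V, forall c, ~ In c L ->
        abs_rel R act k (vmap (swap (fst xs) c) k (snd xs)) (act (swap (fst xs) c) u)
                        (vmap (swap (fst ys) c) k (snd ys)) (act (swap (fst ys) c) v)
  end.

Definition ahd {X : Type} {k : nat} {l : list nat} (a : Args X (k :: l)) : (vecN k * X)%type :=
  match a in Args _ l0 return
        match l0 with nil => unit | k0 :: _ => (vecN k0 * X)%type end with
  | ANil => tt
  | ACons _ _ v x _ => (v, x)
  end.

Definition atl {X : Type} {k : nat} {l : list nat} (a : Args X (k :: l)) : Args X l :=
  match a in Args _ l0 return
        match l0 with nil => unit | _ :: l1 => Args X l1 end with
  | ANil => tt
  | ACons _ _ _ _ r => r
  end.

Fixpoint Args_rel {X : Type} (R : X -> X -> Prop) (act : (V -> V) -> X -> X)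
  (l : list nat) : Args X l -> Args X l -> Prop :=
  match l return Args X l -> Args X l -> Prop with
  | nil => fun _ _ => True
  | k :: l => fun a b =>
      abs_rel R act k (fst (ahd a)) (snd (ahd a)) (fst (ahd b)) (snd (ahd b))
      /\ Args_rel R act l (atl a) (atl b)
  end.

(* kernel of F applied to the quotient map X -> X/R *)
Definition FF_rel {X : Type} (R : X -> X -> Prop) (act : (V -> V) -> X -> X)
  (t s : FF X) : Prop :=
  match t, s with
  | inl x, inl y => x = y
  | inr (existT _ o1 a1), inr (existT _ o2 a2) =>
      exists e : o1 = o2,
        Args_rel R act (ar o2) (eq_rect o1 (fun o => Args X (ar o)) a1 o2 e) a2
  | _, _ => False
  end.

(* alpha n = kernel of a^(n) : F^n 1 -> F_alpha^n 1, where
   a^(0) = id_1, a^(n+1) = q o F(a^(n)) *)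
Fixpoint alpha (n : nat) : Fn n -> Fn n -> Prop :=
  match n return Fn n -> Fn n -> Prop with
  | 0 => fun _ _ => True
  | S n => FF_rel (alpha n) (actF n)
  end.

(* F_alpha^n 1, realised as the quotient F^n 1 / ker a^(n) (a^(n) is onto):
   elements are the equivalence classes *)
Definition Fa (n : nat) : Type :=
  { P : Fn n -> Prop | exists t, P = alpha n t }.

Definition cls (n : nat) (t : Fn n) : Fa n :=
  exist _ (alpha n t) (ex_intro _ t eq_refl).

Definition bangA (n : nat) (P : Fn (S n) -> Prop) : Fn n -> Prop :=
  fun s => exists t, P t /\ alpha n (bang n t) s.

Definition pact (n : nat) (p : fperm) (P : Fn n -> Prop) : Fn n -> Prop :=
  fun t => P (actF n (pg p) t).

(* T_alpha: the Nom-limit of the terminal chain of F_alpha, i.e. the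
   finitely supported compatible tuples *)
Definition compatA (x : forall n, Fa n) : Prop :=
  forall n, proj1_sig (x n) = bangA n (proj1_sig (x (S n))).

Definition fsuppA (x : forall n, Fa n) : Prop :=
  exists A : list V, forall p : fperm, (forall a, In a A -> pf p a = a) ->
    forall n, pact n p (proj1_sig (x n)) = proj1_sig (x n).

Definition Talpha : Type := { x : forall n, Fa n | compatA x /\ fsuppA x }.

(* iota_alpha : U T_alpha -> lim_n U F_alpha^n 1 (valued in prod_n U F_alpha^n 1) *)
Definition iotaA (u : Talpha) : forall n, Fa n := proj1_sig u.

CoInductive Tinf : Type :=
| TVar : V -> Tinf
| TOp : forall op : Sig, Args Tinf (ar op) -> Tinf.

Fixpoint trunc (n : nat) (t : Tinf) : Fn n :=
  match n return Fn n with
  | 0 => tt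
  | S n => match t with
           | TVar x => inl x
           | TOp op a => inr (existT _ op (Args_map (fun x => x) (trunc n) (ar op) a))
           end
  end.

Fixpoint Args_fv {X : Type} (fvX : X -> V -> Prop) (l : list nat) :
  Args X l -> V -> Prop :=
  match l return Args X l -> V -> Prop with
  | nil => fun _ _ => False
  | k :: l => fun a x =>
      (fvX (snd (ahd a)) x /\ ~ vIn k (fst (ahd a)) x) \/ Args_fv fvX l (atl a) x
  end.

Fixpoint fvF (n : nat) : Fn n -> V -> Prop :=
  match n return Fn n -> V -> Prop with
  | 0 => fun _ _ => False
  | S n => fun t x =>
      match t with
      | inl y => y = x
      | inr (existT _ op a) => Args_fv (fvF n) (ar op) a x
      end
  end.

Definition fvT (t : Tinf) (x : V) : Prop := exists n, fvF n (trunc n t) x.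

Definition Tffv : Type := { t : Tinf | exists L : list V, forall x, fvT t x -> In x L }.

(* g composed with the identification T^infty = lim_n U F^n 1, t |-> (t^n)_n *)
Definition gT (t : Tinf) : forall n, Fa n := fun n => cls n (trunc n t).

End Signature.

(* Main.v *)
Require Import Defs.
From Stdlib Require Import List Arith PeanoNat Lia.
From Stdlib Require Import FunctionalExtensionality PropExtensionality ProofIrrelevance.
Import ListNotations.

Lemma fresh (L : list nat) : exists c, ~ In c L.
Proof.
  exists (S (fold_right plus 0 L)).
  assert (H : forall y, In y L -> y <= fold_right plus 0 L).
  { induction L as [|a L IHL]; simpl; intros y Hy; [contradiction|]. destruct Hy as [->|Hy]; [lia|]. specialize (IHL y Hy); lia. }
  intro Hin. specialize (H _ Hin). lia.
Qed.

Lemma swap_invol a b x : swap a b (swap a b x) = x.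
Proof. unfold swap.
  destruct (Nat.eqb_spec x a) as [->|Hxa].
  - destruct (Nat.eqb_spec b a) as [->|Hba]; [auto|]. rewrite Nat.eqb_refl; auto.
  - destruct (Nat.eqb_spec x b) as [->|Hxb].
    + rewrite Nat.eqb_refl; auto.
    + destruct (Nat.eqb_spec x a); [congruence|]. destruct (Nat.eqb_spec x b); congruence.
Qed.

Lemma swap_l a b : swap a b a = b.
Proof. unfold swap; rewrite Nat.eqb_refl; auto. Qed.
Lemma swap_r a b : swap a b b = a.
Proof. unfold swap; destruct (Nat.eqb_spec b a); subst; auto; rewrite Nat.eqb_refl; auto. Qed.
Lemma swap_o a b x : x <> a -> x <> b -> swap a b x = x.
Proof. unfold swap; intros; destruct (Nat.eqb_spec x a); destruct (Nat.eqb_spec x b); congruence. Qed.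

Definition bij (q qi : V -> V) := (forall x, q (qi x) = x) /\ (forall x, qi (q x) = x).
Definition fsupp (q : V -> V) := exists L, forall a, ~ In a L -> q a = a.

Lemma bij_inj q qi x y : bij q qi -> q x = q y -> x = y.
Proof. intros [_ H] E. rewrite <- (H x), <- (H y), E; auto. Qed.
Lemma bij_sym q qi : bij q qi -> bij qi q.
Proof. intros [H1 H2]; split; auto. Qed.
Lemma bij_swap a b : bij (swap a b) (swap a b).
Proof. split; intro; apply swap_invol. Qed.

Lemma swap_conj q qi x d a : bij q qi -> q (swap x d a) = swap (q x) (q d) (q a).
Proof.
  intros B.
  destruct (Nat.eq_dec a x) as [->|Hax]; [rewrite !swap_l; auto|].
  destruct (Nat.eq_dec a d) as [->|Had]; [rewrite !swap_r; auto|].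
  rewrite !swap_o; auto; intro E; apply (bij_inj q qi) in E; auto.
Qed.

Record NS := mkNS { car : Type; nact : (V -> V) -> car -> car;
  nrel : car -> car -> Prop; nfv : car -> V -> Prop }.

Record good (N : NS) : Prop := {
 g_ext : forall p q u, (forall a, p a = q a) -> nact N p u = nact N q u;
 g_comp : forall p q u, nact N p (nact N q u) = nact N (fun a => p (q a)) u;
 g_id : forall u, nact N (fun a => a) u = u;
 g_sym : forall u v, nrel N u v -> nrel N v u;
 g_trans : forall u v w, nrel N u v -> nrel N v w -> nrel N u w;
 g_eqv : forall q qi u v, bij q qi -> nrel N u v -> nrel N (nact N q u) (nact N q v);
 g_fvrel : forall u v x, nrel N u v -> nfv N u x -> nfv N v x;
 g_fvact : forall q qi u x, bij q qi -> nfv N u x -> nfv N (nact N q u) (q x);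
 g_fin : forall u, exists L, forall x, nfv N u x -> In x L;
 g_key : forall q qi u, bij q qi -> fsupp q -> (forall x, nfv N u x -> q x = x) ->
    nrel N u (nact N q u) }.

Lemma g_refl N : good N -> forall u, nrel N u u.
Proof.
  intros G u. pose proof (g_key N G (fun a => a) (fun a => a) u) as H.
  rewrite (g_id N G) in H. apply H; auto. split; auto. exists nil; auto.
Qed.

Lemma g_fvinv N : good N -> forall q qi u y, bij q qi -> nfv N (nact N q u) y -> nfv N u (qi y).
Proof.
  intros G q qi u y B H. pose proof (g_fvact N G qi q _ _ (bij_sym _ _ B) H) as H2.
  rewrite (g_comp N G) in H2. rewrite (g_ext N G _ (fun a => a)) in H2 by (intro; apply B).
  rewrite (g_id N G) in H2. exact H2.
Qed.

Lemma transport (N' N : NS) (phi : car N' -> car N) (psi : car N -> car N') :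
  (forall a, psi (phi a) = a) ->
  (forall p a, phi (nact N' p a) = nact N p (phi a)) ->
  (forall a b, nrel N' a b <-> nrel N (phi a) (phi b)) ->
  (forall a z, nfv N' a z <-> nfv N (phi a) z) ->
  good N -> good N'.
Proof.
  intros Hk Ha Hr Hf G.
  assert (Hinj : forall a b, phi a = phi b -> a = b).
  { intros a b E. rewrite <- (Hk a), <- (Hk b), E; auto. }
  constructor.
  - intros p q u E. apply Hinj. rewrite !Ha. apply (g_ext N G); auto.
  - intros p q u. apply Hinj. rewrite !Ha. apply (g_comp N G).
  - intros u. apply Hinj. rewrite !Ha. apply (g_id N G).
  - intros u v. rewrite !Hr. apply (g_sym N G).
  - intros u v w. rewrite !Hr. apply (g_trans N G).
  - intros q qi u v B. rewrite !Hr, !Ha. apply (g_eqv N G _ qi); auto.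
  - intros u v x. rewrite Hr, !Hf. apply (g_fvrel N G).
  - intros q qi u x B. rewrite !Hf, Ha. apply (g_fvact N G _ qi); auto.
  - intros u. destruct (g_fin N G (phi u)) as [L HL]. exists L. intros x. rewrite Hf. auto.
  - intros q qi u B F HF. rewrite Hr, Ha. apply (g_key N G _ qi); auto.
    intros x. rewrite <- Hf. auto.
Qed.

Definition absN (Y : NS) : NS := mkNS (V * car Y)%type
  (fun p a => (p (fst a), nact Y p (snd a)))
  (fun a b => exists L : list V, forall c, ~ In c L ->
     nrel Y (nact Y (swap (fst a) c) (snd a)) (nact Y (swap (fst b) c) (snd b)))
  (fun a z => nfv Y (snd a) z /\ fst a <> z).

Lemma absN_good Y : good Y -> good (absN Y).
Proof.
  intro G. constructor; simpl.
  - intros p q [x u] E; simpl. rewrite E, (g_ext Y G p q); auto.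
  - intros p q [x u]; simpl. rewrite (g_comp Y G); auto.
  - intros [x u]; simpl. rewrite (g_id Y G); auto.
  - intros [x u] [y v] [L H]; exists L; intros c Hc; apply (g_sym Y G); auto.
  - intros [x u] [y v] [z w] [L1 H1] [L2 H2]; exists (L1 ++ L2); intros c Hc.
    rewrite in_app_iff in Hc. eapply (g_trans Y G); [apply H1|apply H2]; tauto.
  - intros q qi [x u] [y v] B [L H]; simpl in *. exists (map q L). intros c Hc.
    assert (Hd : ~ In (qi c) L).
    { intro Hin. apply Hc. replace c with (q (qi c)) by apply B. apply in_map; auto. }
    pose proof (g_eqv Y G q qi _ _ B (H _ Hd)) as E.
    rewrite !(g_comp Y G) in E. rewrite !(g_comp Y G).
    rewrite (g_ext Y G (fun a => q (swap x (qi c) a)) (fun a => swap (q x) c (q a))) in E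
      by (intro a; rewrite (swap_conj q qi) by auto; destruct B as [B1 _]; rewrite B1; auto).
    rewrite (g_ext Y G (fun a => q (swap y (qi c) a)) (fun a => swap (q y) c (q a))) in E
      by (intro a; rewrite (swap_conj q qi) by auto; destruct B as [B1 _]; rewrite B1; auto).
    exact E.
  - intros [x u] [y v] z [L H] [Hz Hxz]; simpl in *.
    destruct (g_fin Y G u) as [Lu HLu]. destruct (g_fin Y G v) as [Lv HLv].
    destruct (fresh (z :: x :: y :: L ++ Lu ++ Lv)) as [c Hc].
    simpl in Hc. rewrite !in_app_iff in Hc.
    assert (Hc' : ~ In c L) by tauto.
    specialize (H c Hc').
    assert (F1 : nfv Y (nact Y (swap x c) u) z).
    { rewrite <- (swap_o x c z) by (auto; intro; subst; tauto).
      apply (g_fvact Y G _ (swap x c)); auto. apply bij_swap. }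
    apply (g_fvrel Y G _ _ _ H) in F1.
    apply (g_fvinv Y G _ (swap y c)) in F1; [|apply bij_swap].
    destruct (Nat.eq_dec z y).
    + subst. rewrite swap_l in F1. exfalso. apply HLv in F1. tauto.
    + rewrite swap_o in F1 by (auto; intro; subst; tauto). auto.
  - intros q qi [x u] z B [H1 H2]; simpl in *. split.
    + apply (g_fvact Y G _ qi); auto.
    + intro E. apply (bij_inj q qi) in E; auto.
  - intros [x u]. destruct (g_fin Y G u) as [L HL]. exists L. intros z [Hz _]; auto.
  - intros q qi [x u] B [Ls HLs] HF; simpl in *.
    destruct (g_fin Y G u) as [Lu HLu].
    exists (x :: q x :: Ls ++ Lu). intros c Hc. simpl in Hc. rewrite in_app_iff in Hc.
    set (q' := fun a => swap (q x) c (q (swap x c a))).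
    set (qi' := fun a => swap x c (qi (swap (q x) c a))).
    assert (Bq : bij q' qi').
    { destruct B as [B1 B2]; split; intro a; unfold q', qi';
      rewrite ?swap_invol, ?B1, ?B2, ?swap_invol; auto. }
    assert (Fq : fsupp q').
    { exists (x :: c :: q x :: Ls). intros a Ha. simpl in Ha. unfold q'.
      rewrite (swap_o x c a) by (intro; subst; tauto). rewrite (HLs a) by tauto.
      apply swap_o; intro; subst; tauto. }
    pose proof (g_key Y G q' qi' (nact Y (swap x c) u) Bq Fq) as K.
    rewrite (g_comp Y G) in K.
    rewrite (g_ext Y G (fun a => q' (swap x c a)) (fun a => swap (q x) c (q a))) in K
      by (intro a; unfold q'; rewrite swap_invol; auto).
    rewrite (g_comp Y G (swap (q x) c) q u). apply K.
    intros w Hw. apply (g_fvinv Y G _ (swap x c)) in Hw; [|apply bij_swap].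
    unfold q'. destruct (Nat.eq_dec (swap x c w) x) as [E|E].
    + assert (Ew : w = c) by (rewrite <- (swap_invol x c w), E, swap_l; auto).
      subst w. rewrite swap_r, swap_l. auto.
    + assert (Hq : q (swap x c w) = swap x c w) by (apply HF; split; auto).
      assert (Hwc : swap x c w <> c) by (intro E2; rewrite E2 in Hw; apply HLu in Hw; tauto).
      assert (Hw2 : w = swap x c w).
      { rewrite <- (swap_invol x c w) at 1. apply swap_o; auto. }
      rewrite <- Hw2 in Hq, Hwc, E |- *. rewrite Hq. apply swap_o; auto.
      intro E3. rewrite <- Hq in E3. apply (bij_inj q qi) in E3; auto.
Qed.


Lemma vmap_ext f g k v : (forall a, f a = g a) -> vmap f k v = vmap g k v.
Proof. intro E; induction k; simpl; auto. destruct v; simpl; rewrite E, IHk; auto. Qed.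
Lemma vmap_comp f g k v : vmap f k (vmap g k v) = vmap (fun a => f (g a)) k v.
Proof. induction k; simpl; auto. destruct v; simpl; rewrite IHk; auto. Qed.
Lemma vmap_id k v : vmap (fun a => a) k v = v.
Proof. induction k; simpl; auto. destruct v; simpl; rewrite IHk; auto. Qed.
Lemma vIn_map q qi k v x : bij q qi -> vIn k (vmap q k v) (q x) <-> vIn k v x.
Proof.
  intro B; induction k; simpl; [tauto|]. destruct v as [y v]; simpl. rewrite IHk.
  split; intros [E|E]; auto; left.
  apply (bij_inj q qi) in E; auto.
Qed.

Definition UNIT : NS := mkNS unit (fun _ t => t) (fun _ _ => True) (fun _ _ => False).
Lemma UNIT_good : good UNIT.
Proof. constructor; simpl; auto; try tauto; intros; exists nil; tauto. Qed.

Definition PROD (A B : NS) : NS := mkNS (car A * car B)%type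
  (fun p a => (nact A p (fst a), nact B p (snd a)))
  (fun a b => nrel A (fst a) (fst b) /\ nrel B (snd a) (snd b))
  (fun a z => nfv A (fst a) z \/ nfv B (snd a) z).

Lemma PROD_good A B : good A -> good B -> good (PROD A B).
Proof.
  intros GA GB. constructor; simpl.
  - intros p q [u v] E; simpl. rewrite (g_ext A GA p q), (g_ext B GB p q); auto.
  - intros p q [u v]; simpl. rewrite (g_comp A GA), (g_comp B GB); auto.
  - intros [u v]; simpl. rewrite (g_id A GA), (g_id B GB); auto.
  - intros [u v] [u' v'] [H1 H2]; split; [apply (g_sym A GA)|apply (g_sym B GB)]; auto.
  - intros [u v] [u' v'] [u'' v''] [H1 H2] [H3 H4]; split;
      [eapply (g_trans A GA)|eapply (g_trans B GB)]; eauto.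
  - intros q qi [u v] [u' v'] Bq [H1 H2]; split;
      [apply (g_eqv A GA _ qi)|apply (g_eqv B GB _ qi)]; auto.
  - intros [u v] [u' v'] x [H1 H2] [H|H]; [left; eapply (g_fvrel A GA)|right; eapply (g_fvrel B GB)]; eauto.
  - intros q qi [u v] x Bq [H|H]; [left; apply (g_fvact A GA _ qi)|right; apply (g_fvact B GB _ qi)]; auto.
  - intros [u v]. destruct (g_fin A GA u) as [L1 H1]. destruct (g_fin B GB v) as [L2 H2].
    exists (L1 ++ L2). intros x [H|H]; apply in_or_app; auto.
  - intros q qi [u v] Bq F HF; simpl in *; split;
      [apply (g_key A GA _ qi)|apply (g_key B GB _ qi)]; auto.
Qed.

Definition ABS (k : nat) (N : NS) : NS := mkNS (vecN k * car N)%type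
  (fun p a => (vmap p k (fst a), nact N p (snd a)))
  (fun a b => abs_rel (nrel N) (nact N) k (fst a) (snd a) (fst b) (snd b))
  (fun a z => nfv N (snd a) z /\ ~ vIn k (fst a) z).

Lemma ABS_good k N : good N -> good (ABS k N).
Proof.
  intro G. induction k.
  - apply (transport (ABS 0 N) N snd (fun u => (tt, u))); simpl; try tauto.
    + intros [[] u]; auto.
  - apply (transport (ABS (S k) N) (absN (ABS k N))
      (fun a => (fst (fst a), (snd (fst a), snd a)))
      (fun b => ((fst b, fst (snd b)), snd (snd b)))).
    + intros [[x xs] u]; auto.
    + intros p [[x xs] u]; auto.
    + intros [[x xs] u] [[y ys] v]; simpl. tauto.
    + intros [[x xs] u] z; simpl. tauto.
    + apply absN_good; auto.
Qed.

Definition ARGS (N : NS) (l : list nat) : NS := mkNS (Args (car N) l)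
  (fun p a => Args_map p (nact N p) l a)
  (Args_rel (nrel N) (nact N) l)
  (Args_fv (nfv N) l).

Lemma Args_eta0 X l (a : Args X l) :
  match l return Args X l -> Prop with
  | nil => fun a => a = ANil X
  | k :: l' => fun a => a = ACons X k l' (fst (ahd a)) (snd (ahd a)) (atl a)
  end a.
Proof. destruct a; reflexivity. Qed.
Lemma Args_eta X k l (a : Args X (k :: l)) : a = ACons X k l (fst (ahd a)) (snd (ahd a)) (atl a).
Proof. exact (Args_eta0 X (k :: l) a). Qed.
Lemma Args_eta_nil X (a : Args X nil) : a = ANil X.
Proof. exact (Args_eta0 X nil a). Qed.

Lemma ARGS_good N l : good N -> good (ARGS N l).
Proof.
  intro G. induction l as [|k l IH].
  - apply (transport (ARGS N nil) UNIT (fun _ => tt) (fun _ => ANil _)); simpl; try tauto.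
    + intro a; rewrite (Args_eta_nil _ a); auto.
    + apply UNIT_good.
  - apply (transport (ARGS N (k :: l)) (PROD (ABS k N) (ARGS N l))
      (fun a => (ahd a, atl a))
      (fun b => ACons _ k l (fst (fst b)) (snd (fst b)) (snd b))).
    + intro a; symmetry; exact (Args_eta _ _ _ a).
    + intros p a. rewrite (Args_eta _ _ _ a). simpl. auto.
    + intros a b. simpl. tauto.
    + intros a z. simpl. tauto.
    + apply PROD_good; [apply ABS_good|]; auto.
Qed.


Definition FFN (Sig : Type) (ar : Sig -> list nat) (N : NS) : NS := mkNS (FF Sig ar (car N))
  (fun p t => FF_map Sig ar p (nact N p) t)
  (FF_rel Sig ar (nrel N) (nact N))
  (fun t x => match t with
      | inl y => y = x
      | inr (existT _ op a) => Args_fv (nfv N) (ar op) a x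
      end).

Lemma FFN_good Sig ar N : good N -> good (FFN Sig ar N).
Proof.
  intro G. pose proof (fun op => ARGS_good N (ar op) G) as GA.
  constructor; simpl.
  - intros p q [x|[o a]] E; simpl; [rewrite E; auto|].
    f_equal; f_equal; exact (g_ext _ (GA o) p q a E).
  - intros p q [x|[o a]]; simpl; auto. f_equal; f_equal; exact (g_comp _ (GA o) p q a).
  - intros [x|[o a]]; simpl; auto. f_equal; f_equal; exact (g_id _ (GA o) a).
  - intros [x|[o a]] [y|[o' b]]; simpl; auto; try tauto.
    intros [e H]. subst o'. exists eq_refl. simpl in *. apply (g_sym _ (GA o)); auto.
  - intros [x|[o a]] [y|[o' b]] [z|[o'' c]]; simpl; try tauto; try congruence.
    intros [e H] [e' H']. subst o' o''. exists eq_refl. simpl in *.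
    eapply (g_trans _ (GA o)); eauto.
  - intros q qi [x|[o a]] [y|[o' b]] B; simpl; try tauto; try congruence.
    intros [e H]. subst o'. exists eq_refl. simpl in *. apply (g_eqv _ (GA o) _ qi); auto.
  - intros [x|[o a]] [y|[o' b]] z; simpl; try tauto; try congruence.
    intros [e H]. subst o'. simpl in *. apply (g_fvrel _ (GA o)); auto.
  - intros q qi [x|[o a]] z B; simpl; try congruence.
    apply (g_fvact _ (GA o) _ qi); auto.
  - intros [x|[o a]]. + exists [x]; simpl; auto.
    + destruct (g_fin _ (GA o) a) as [L HL]. exists L; auto.
  - intros q qi [x|[o a]] B F HF; simpl in *. + symmetry; auto.
    + exists eq_refl. simpl. apply (g_key _ (GA o) _ qi); auto.
Qed.

Definition LEV (Sig : Type) (ar : Sig -> list nat) (n : nat) : NS :=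
  mkNS (Fn Sig ar n) (actF Sig ar n) (alpha Sig ar n) (fvF Sig ar n).

Lemma LEV_good Sig ar n : good (LEV Sig ar n).
Proof.
  induction n.
  - exact UNIT_good.
  - exact (FFN_good Sig ar _ IHn).
Qed.


Lemma Args_map_comp {X Y Z} f1 (g1 : Y -> Z) f2 (g2 : X -> Y) l a :
  Args_map f1 g1 l (Args_map f2 g2 l a) = Args_map (fun x => f1 (f2 x)) (fun x => g1 (g2 x)) l a.
Proof. induction a; simpl; auto. rewrite vmap_comp, IHa; auto. Qed.

Lemma Args_map_ext {X Y} f1 f2 (g1 g2 : X -> Y) l a :
  (forall x, f1 x = f2 x) -> (forall x, g1 x = g2 x) -> Args_map f1 g1 l a = Args_map f2 g2 l a.
Proof. intros E1 E2; induction a; simpl; auto. rewrite (vmap_ext f1 f2), E2, IHa; auto. Qed.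

Lemma bang_act Sig ar n p t : bang Sig ar n (actF Sig ar (S n) p t) = actF Sig ar n p (bang Sig ar n t).
Proof.
  revert t; induction n; intro t; simpl; auto.
  destruct t as [x|[o a]]; simpl; auto.
  rewrite !Args_map_comp. f_equal. f_equal. apply Args_map_ext; auto.
Qed.

Lemma abs_rel_map {X Y} (R : X -> X -> Prop) (R' : Y -> Y -> Prop) act act' (f : X -> Y) :
  (forall a b, R a b -> R' (f a) (f b)) -> (forall p a, f (act p a) = act' p (f a)) ->
  forall k xs u ys v, abs_rel R act k xs u ys v -> abs_rel R' act' k xs (f u) ys (f v).
Proof.
  intros HR Ha k; induction k; simpl; intros xs u ys v H; auto.
  destruct H as [L H]. exists L. intros c Hc. rewrite <- !Ha. apply IHk; auto.
Qed.

Lemma Args_rel_map {X Y} (R : X -> X -> Prop) (R' : Y -> Y -> Prop) act act' (f : X -> Y) :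
  (forall a b, R a b -> R' (f a) (f b)) -> (forall p a, f (act p a) = act' p (f a)) ->
  forall l a b, Args_rel R act l a b ->
   Args_rel R' act' l (Args_map (fun x => x) f l a) (Args_map (fun x => x) f l b).
Proof.
  intros HR Ha l; induction l as [|k l IHl]; simpl; intros a b H; auto.
  rewrite (Args_eta _ _ _ a), (Args_eta _ _ _ b). simpl. rewrite !vmap_id.
  destruct H; split; [apply abs_rel_map with R act|apply IHl]; auto.
Qed.

Lemma bang_rel Sig ar n u v : alpha Sig ar (S n) u v -> alpha Sig ar n (bang Sig ar n u) (bang Sig ar n v).
Proof.
  revert u v; induction n; simpl; intros u v H; auto.
  destruct u as [x|[o a]], v as [y|[o' b]]; simpl in *; auto; try tauto.
  destruct H as [e H]. subst o'. exists eq_refl. simpl in *.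
  apply (Args_rel_map (alpha Sig ar (S n)) (alpha Sig ar n) (actF Sig ar (S n)) (actF Sig ar n)); auto.
  intros; apply bang_act.
Qed.

Lemma bang_trunc Sig ar n t : bang Sig ar n (trunc Sig ar (S n) t) = trunc Sig ar n t.
Proof.
  revert t; induction n; intro t; simpl; auto.
  destruct t as [x|o a]; simpl; auto.
  rewrite Args_map_comp. f_equal. f_equal. apply Args_map_ext; auto.
Qed.


Lemma a_refl (Sig : Type) (ar : Sig -> list nat) (n : nat) u : alpha Sig ar n u u. Proof. exact (g_refl _ (LEV_good Sig ar n) u). Qed.
Lemma a_sym (Sig : Type) (ar : Sig -> list nat) (n : nat) u v : alpha Sig ar n u v -> alpha Sig ar n v u. Proof. exact (g_sym _ (LEV_good Sig ar n) u v). Qed.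
Lemma a_trans (Sig : Type) (ar : Sig -> list nat) (n : nat) u v w : alpha Sig ar n u v -> alpha Sig ar n v w -> alpha Sig ar n u w.
Proof. exact (g_trans _ (LEV_good Sig ar n) u v w). Qed.
Lemma a_eqv (Sig : Type) (ar : Sig -> list nat) (n : nat) q qi u v : bij q qi -> alpha Sig ar n u v ->
  alpha Sig ar n (actF Sig ar n q u) (actF Sig ar n q v).
Proof. exact (g_eqv _ (LEV_good Sig ar n) q qi u v). Qed.
Lemma a_fvrel (Sig : Type) (ar : Sig -> list nat) (n : nat) u v x : alpha Sig ar n u v -> fvF Sig ar n u x -> fvF Sig ar n v x.
Proof. exact (g_fvrel _ (LEV_good Sig ar n) u v x). Qed.
Lemma a_fvact (Sig : Type) (ar : Sig -> list nat) (n : nat) q qi u x : bij q qi -> fvF Sig ar n u x -> fvF Sig ar n (actF Sig ar n q u) (q x).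
Proof. exact (g_fvact _ (LEV_good Sig ar n) q qi u x). Qed.
Lemma a_fin (Sig : Type) (ar : Sig -> list nat) (n : nat) u : exists L, forall x, fvF Sig ar n u x -> In x L.
Proof. exact (g_fin _ (LEV_good Sig ar n) u). Qed.
Lemma a_key (Sig : Type) (ar : Sig -> list nat) (n : nat) q qi u : bij q qi -> fsupp q -> (forall x, fvF Sig ar n u x -> q x = x) ->
  alpha Sig ar n u (actF Sig ar n q u).
Proof. exact (g_key _ (LEV_good Sig ar n) q qi u). Qed.
Lemma a_comp (Sig : Type) (ar : Sig -> list nat) (n : nat) p q u : actF Sig ar n p (actF Sig ar n q u) = actF Sig ar n (fun a => p (q a)) u.
Proof. exact (g_comp _ (LEV_good Sig ar n) p q u). Qed.
Lemma a_ext (Sig : Type) (ar : Sig -> list nat) (n : nat) p q u : (forall a, p a = q a) -> actF Sig ar n p u = actF Sig ar n q u.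
Proof. exact (g_ext _ (LEV_good Sig ar n) p q u). Qed.
Lemma a_id (Sig : Type) (ar : Sig -> list nat) (n : nat) u : actF Sig ar n (fun a => a) u = u.
Proof. exact (g_id _ (LEV_good Sig ar n) u). Qed.


Lemma compat_gT Sig ar t : compatA Sig ar (gT Sig ar t).
Proof.
  intro n. unfold gT, cls; cbn [proj1_sig]. unfold bangA. apply functional_extensionality; intro s.
  apply propositional_extensionality. split.
  - intro H. exists (trunc Sig ar (S n) t). split; [apply (a_refl Sig ar (S n))|].
    rewrite bang_trunc; auto.
  - intros [t' [H1 H2]]. apply bang_rel in H1. rewrite bang_trunc in H1.
    eapply a_trans; eauto.
Qed.

Lemma fsupp_gT Sig ar t L : (forall x, fvT Sig ar t x -> In x L) -> fsuppA Sig ar (gT Sig ar t).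
Proof.
  intro HL. exists L. intros p Hp n. unfold gT, cls; cbn [proj1_sig]. unfold pact.
  apply functional_extensionality; intro s. apply propositional_extensionality.
  set (T := trunc Sig ar n t).
  assert (B : bij (pf p) (pg p)) by (split; [apply pfg|apply pgf]).
  assert (Bi : bij (pg p) (pf p)) by (split; [apply pgf|apply pfg]).
  assert (FP : fsupp (pf p)) by apply pfin.
  assert (FG : fsupp (pg p)).
  { destruct (pfin p) as [L0 H0]. exists L0. intros a Ha.
    rewrite <- (H0 a Ha) at 1. apply pgf. }
  assert (HP : forall x, fvF Sig ar n T x -> pf p x = x).
  { intros x Hx. apply Hp, HL. exists n; auto. }
  assert (HG : forall x, fvF Sig ar n T x -> pg p x = x).
  { intros x Hx. rewrite <- (HP x Hx) at 1. apply pgf. }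
  split; intro H.
  - apply (a_eqv _ _ _ (pf p) (pg p)) in H; auto.
    rewrite a_comp, (a_ext _ _ _ (fun a => pf p (pg p a)) (fun a => a)), a_id in H by (intro; apply pfg).
    eapply a_trans; [|exact H]. apply (a_key _ _ _ _ (pg p)); auto.
  - apply (a_eqv _ _ _ (pg p) (pf p)) in H; auto.
    eapply a_trans; [|exact H]. apply (a_key _ _ _ _ (pf p)); auto.
Qed.

Definition swapP (x c : V) : fperm.
Proof.
  refine {| pf := swap x c; pg := swap x c; pfg := swap_invol x c; pgf := swap_invol x c |}.
  exists [x; c]. intros a Ha. apply swap_o; intro; subst; simpl in Ha; tauto.
Defined.

Theorem proposition5p17 (S : Type) (ar : S -> list nat)
  (Hcount : exists e : S -> nat, forall o1 o2, e o1 = e o2 -> o1 = o2) :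
  exists h : Tffv S ar -> Talpha S ar,
    (forall s n, proj1_sig (h s) n = cls S ar n (trunc S ar n (proj1_sig s))) /\
    is_pullback (@proj1_sig _ _) h (gT S ar) (iotaA S ar).
Proof.
  set (h := fun s : Tffv S ar =>
    exist (fun x => compatA S ar x /\ fsuppA S ar x) (gT S ar (proj1_sig s))
      (conj (compat_gT S ar (proj1_sig s))
            (let (L, HL) := proj2_sig s in fsupp_gT S ar (proj1_sig s) L HL)) : Talpha S ar).
  exists h. split; [intros; reflexivity|]. split; [intros; reflexivity|].
  intros a b Hab.
  assert (Hfin : exists L, forall x, fvT S ar a x -> In x L).
  { destruct b as [bx [bc [A HA]]]. exists A. unfold iotaA in Hab; simpl in Hab. subst bx.
    intros x [n Hx]. destruct (in_dec Nat.eq_dec x A) as [|Hn]; auto. exfalso.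
    set (T := trunc S ar n a) in Hx.
    destruct (a_fin S ar n T) as [L HL].
    destruct (fresh (x :: A ++ L)) as [c Hc]. simpl in Hc. rewrite in_app_iff in Hc.
    assert (Hp : forall a0, In a0 A -> pf (swapP x c) a0 = a0).
    { intros a0 Ha0. simpl. apply swap_o; intro; subst; tauto. }
    pose proof (HA (swapP x c) Hp n) as E. unfold gT, cls in E; cbn [proj1_sig] in E. unfold pact in E.
    pose proof (f_equal (fun P => P (actF S ar n (swap x c) T)) E) as E2. cbv beta in E2. change (pg (swapP x c)) with (swap x c) in E2.
    fold T in E2.
    rewrite a_comp, (a_ext _ _ _ (fun a => swap x c (swap x c a)) (fun a => a)), a_id in E2 by (intro; apply swap_invol).
    assert (Hal : alpha S ar n T (actF S ar n (swap x c) T)).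
    { rewrite <- E2. apply a_refl. }
    pose proof (a_fvact S ar n (swap x c) (swap x c) T x (bij_swap x c) Hx) as F.
    rewrite swap_l in F. apply (a_fvrel _ _ _ _ _ _ (a_sym _ _ _ _ _ Hal)) in F.
    apply HL in F. tauto. }
  destruct Hfin as [L HL].
  exists (exist _ a (ex_intro _ L HL)). split.
  - split; [reflexivity|]. destruct b as [bx bp]. unfold iotaA in Hab; simpl in Hab. subst bx.
    unfold h; simpl. f_equal. apply proof_irrelevance.
  - intros [a' Ha'] [E1 E2]. simpl in E1. subst a'. f_equal. apply proof_irrelevance.
Qed.
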